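(* Let $W\in\{\mathrm{A}_{\frac12\infty},\mathrm{D}_{\frac12\infty}\}$ and $\lambda\in\mathbb{C}$, and set $\check H_{W,\lambda}=\{\xi\in\check H_{W,\mathbb{C}}:\dot I_W(\xi)=\lambda\xi\}$, $\overline H_{W,\lambda}=\check H_{W,\lambda}\cap\overline H_{W,\mathbb{C}}$. Then $\dim_{\mathbb{C}}\check H_{W,\lambda}=1$ and $\dim_{\mathbb{C}}\overline H_{W,\lambda}=0$, except in the case $W=\mathrm{D}_{\frac12\infty}$, $\lambda=2$, where $\dim_{\mathbb{C}}\check H_{W,2}=2$, $\dim_{\mathbb{C}}\overline H_{W,2}=1$, and $\overline H_{W,2}$ is spanned by $\gamma_{c_0^+}-\gamma_{c_0^-}$.
   Context: Index sets: $C_{W,0}=\{c_0^{(n)}:n\ge1\}$ (type $\mathrm{A}_{\frac12\infty}$) or $\{c_0^{(n)}:n\ge1\}\cup\{c_0^+,c_0^-\}$ (type $\mathrm{D}_{\frac12\infty}$); $C_{W,1}=\{c_1^{(n)}:n\ge1\}$; $C_W=C_{W,0}\sqcup C_{W,1}$. Adjacency: $c_0^{(n)}$ is adjacent to $c_1^{(n)}$ and $c_1^{(n+1)}$ ($n\ge1$); in type D, $c_0^\pm$ are adjacent to $c_1^{(1)}$; no others. $\overline H_{W,\mathbb{C}}$ is the Hilbert space $\ell^2(C_W)$ with orthonormal basis $\{\gamma_c\}$, and $\check H_{W,\mathbb{C}}=\prod_{c\in C_W}\mathbb{C}\gamma_c$ is the space of all formal sums $\sum a_c\gamma_c$. $I_W$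 is the symmetric form with $I_W(\gamma_c,\gamma_c)=2$, $I_W(\gamma_c,\gamma_{c'})=-1$ if $c,c'$ adjacent, $0$ otherwise (i.e. $I_W=J_W+{}^tJ_W$, the intersection form for suspension dimension $d\equiv0\bmod 4$), and $\dot I_W(\xi)=\sum_{c}I_W(\xi,\gamma_c)\gamma_c$, which is well defined on $\check H_{W,\mathbb{C}}$ since each index has finitely many neighbours. *)

(* Defs.v *)
From Stdlib Require Import Reals.
From Coquelicot Require Import Coquelicot.
Open Scope R_scope.

Inductive Wtype := TypeA | TypeD .

(* Indices: c0 n = c_0^{(n+1)}, c1 n = c_1^{(n+1)}, c0p = c_0^+, c0m = c_0^-.
   c0p, c0m belong to C_W only when W = TypeD. *)
Inductive Idx := c0 (n : nat) | c1 (n : nat) | c0p | c0m.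

Definition Idx_eq_dec (a b : Idx) : {a = b} + {a <> b}.
Proof. decide equality; apply Nat.eq_dec. Defined.

Definition inCW (W : Wtype) (c : Idx) : Prop :=
  match c with
  | c0p | c0m => W = TypeD
  | _ => True
  end.

(* Formal sums sum_c a_c gamma_c, c in C_W, as functions Idx -> C vanishing off C_W. *)
Definition checkH (W : Wtype) (xi : Idx -> C) : Prop :=
  forall c, ~ inCW W c -> xi c = RtoC 0.

Definition gamma (c : Idx) : Idx -> C :=
  fun c' => if Idx_eq_dec c c' then RtoC 1 else RtoC 0.

(* \dot I_W (xi) = sum_c I_W(xi, gamma_c) gamma_c ; coefficient at c is
   2 xi_c - sum of xi over the neighbours of c in C_W. *)
Definition Idot (W : Wtype) (xi : Idx -> C) (c : Idx) : C :=
  match c with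
  | c0 n => Cminus (Cmult (RtoC 2) (xi (c0 n))) (Cplus (xi (c1 n)) (xi (c1 (S n))))
  | c1 O =>
      match W with
      | TypeA => Cminus (Cmult (RtoC 2) (xi (c1 O))) (xi (c0 O))
      | TypeD => Cminus (Cmult (RtoC 2) (xi (c1 O)))
                        (Cplus (xi (c0 O)) (Cplus (xi c0p) (xi c0m)))
      end
  | c1 (S n) => Cminus (Cmult (RtoC 2) (xi (c1 (S n)))) (Cplus (xi (c0 n)) (xi (c0 (S n))))
  | c0p => match W with
           | TypeA => RtoC 0
           | TypeD => Cminus (Cmult (RtoC 2) (xi c0p)) (xi (c1 O))
           end
  | c0m => match W with
           | TypeA => RtoC 0
           | TypeD => Cminus (Cmult (RtoC 2) (xi c0m)) (xi (c1 O))
           end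
  end.

(* Membership in the Hilbert space l^2(C_W) (c0p, c0m are finitely many). *)
Definition inl2 (xi : Idx -> C) : Prop :=
  ex_series (fun n => (Cmod (xi (c0 n)))^2) /\ ex_series (fun n => (Cmod (xi (c1 n)))^2).

Definition checkHeig (W : Wtype) (lam : C) (xi : Idx -> C) : Prop :=
  checkH W xi /\ forall c, Idot W xi c = Cmult lam (xi c).

Definition barHeig (W : Wtype) (lam : C) (xi : Idx -> C) : Prop :=
  checkHeig W lam xi /\ inl2 xi.

Fixpoint csum (k : nat) (f : nat -> C) : C :=
  match k with O => RtoC 0 | S k' => Cplus (csum k' f) (f k') end.

Definition dimC (S : (Idx -> C) -> Prop) (k : nat) : Prop :=
  exists v : nat -> Idx -> C,
    (forall i, (i < k)%nat -> S (v i)) /\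
    (forall a : nat -> C,
        (forall c, csum k (fun i => Cmult (a i) (v i c)) = RtoC 0) ->
        forall i, (i < k)%nat -> a i = RtoC 0) /\
    (forall xi, S xi -> exists a : nat -> C,
        forall c, xi c = csum k (fun i => Cmult (a i) (v i c))).

(* Main.v *)
Require Import Defs.
From Stdlib Require Import Reals Lra Lia Classical FunctionalExtensionality.
From Coquelicot Require Import Coquelicot.

Local Open Scope C_scope.
Notation c1 := Defs.c1.
Notation c0 := Defs.c0.

Definition mu (lam : C) : C := RtoC 2 - lam.

Lemma Cmult_eq0 (a b : C) : a * b = 0 -> a = 0 \/ b = 0.
Proof.
  intro H. destruct (classic (a = 0)) as [Ha|Ha]; [now left|].
  destruct (classic (b = 0)) as [Hb|Hb]; [now right|].
  exfalso; exact (Cmult_neq_0 a b Ha Hb H).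
Qed.

Lemma lin (k0 x y u1 v1 u2 v2 u3 v3 k1 k2 k3 : C) :
  k0 <> 0 -> u1 = v1 -> u2 = v2 -> u3 = v3 ->
  k0 * (x - y) = k1 * (u1 - v1) + k2 * (u2 - v2) + k3 * (u3 - v3) -> x = y.
Proof.
  intros Hk E1 E2 E3 H. subst.
  assert (H' : k0 * (x - y) = 0) by (rewrite H; ring).
  destruct (Cmult_eq0 _ _ H') as [H0|H0]; [contradiction|].
  replace x with ((x - y) + y) by ring. rewrite H0; ring.
Qed.

Lemma one_neq0 : RtoC 1 <> 0.
Proof. intro H. injection H. lra. Qed.

Ltac lin0 H k1 := eapply (lin 1 _ _ _ _ 0 0 0 0 k1 0 0 one_neq0); [exact H|reflexivity|reflexivity|unfold mu; ring].

Lemma Idot_lin W a b xi eta c :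
  Idot W (fun c => a * xi c + b * eta c) c = a * Idot W xi c + b * Idot W eta c.
Proof. destruct c as [n|[|n]| |]; destruct W; simpl; ring. Qed.

Lemma heig_lin W lam a b xi eta :
  checkHeig W lam xi -> checkHeig W lam eta ->
  checkHeig W lam (fun c => a * xi c + b * eta c).
Proof.
  intros [H1 H2] [H3 H4]; split.
  - intros c Hc. rewrite H1, H3 by auto. ring.
  - intro c. rewrite Idot_lin, H2, H4. ring.
Qed.

Lemma rec1 W lam xi n : checkHeig W lam xi ->
  xi (c1 (S n)) = mu lam * xi (c0 n) - xi (c1 n).
Proof. intros [_ H]. specialize (H (c0 n)). simpl in H. lin0 H (-1). Qed.

Lemma rec2 W lam xi n : checkHeig W lam xi ->
  xi (c0 (S n)) = mu lam * xi (c1 (S n)) - xi (c0 n).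
Proof. intros [_ H]. specialize (H (c1 (S n))). simpl in H. lin0 H (-1). Qed.

Lemma recA0 lam xi : checkHeig TypeA lam xi -> xi (c0 0) = mu lam * xi (c1 0).
Proof. intros [_ H]. specialize (H (c1 0)). simpl in H. lin0 H (-1). Qed.

Lemma recD0 lam xi : checkHeig TypeD lam xi ->
  xi (c0 0) = mu lam * xi (c1 0) - (xi c0p + xi c0m).
Proof. intros [_ H]. specialize (H (c1 0)). simpl in H. lin0 H (-1). Qed.

Lemma recDp lam xi : checkHeig TypeD lam xi -> xi (c1 0) = mu lam * xi c0p.
Proof. intros [_ H]. specialize (H c0p). simpl in H. lin0 H (-1). Qed.

Lemma recDm lam xi : checkHeig TypeD lam xi -> xi (c1 0) = mu lam * xi c0m.
Proof. intros [_ H]. specialize (H c0m). simpl in H. lin0 H (-1). Qed.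

Lemma zero_chain W lam d : checkHeig W lam d -> d (c1 0) = 0 -> d (c0 0) = 0 ->
  forall n, d (c1 n) = 0 /\ d (c0 n) = 0.
Proof.
  intros H H0 H1 n. induction n as [|n [IH1 IH2]]; [auto|].
  assert (E : d (c1 (S n)) = 0) by (rewrite (rec1 _ _ _ _ H), IH1, IH2; ring).
  split; [exact E|]. rewrite (rec2 _ _ _ _ H), E, IH2; ring.
Qed.

Lemma zeroA lam d : checkHeig TypeA lam d -> d (c1 0) = 0 -> forall c, d c = 0.
Proof.
  intros H H0.
  assert (H1 : d (c0 0) = 0) by (rewrite (recA0 _ _ H), H0; ring).
  destruct (zero_chain _ _ _ H H0 H1) as [Z1 Z2] || idtac.
  intros [n|n| |]; try apply (zero_chain _ _ _ H H0 H1 n);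
  apply (proj1 H); simpl; discriminate.
Qed.

Lemma zeroD lam d : checkHeig TypeD lam d -> d c0p = 0 -> d c0m = 0 -> forall c, d c = 0.
Proof.
  intros H Hp Hm.
  assert (H0 : d (c1 0) = 0) by (rewrite (recDp _ _ H), Hp; ring).
  assert (H1 : d (c0 0) = 0) by (rewrite (recD0 _ _ H), H0, Hp, Hm; ring).
  intros [n|n| |]; try apply (zero_chain _ _ _ H H0 H1 n); assumption.
Qed.

Fixpoint pr (m a b : C) (n : nat) : C * C :=
  match n with
  | O => (a, b)
  | S n' => (m * snd (pr m a b n') - fst (pr m a b n'),
             m * (m * snd (pr m a b n') - fst (pr m a b n')) - snd (pr m a b n'))
  end.

Definition mk (m a b p q : C) : Idx -> C := fun c =>
  match c with
  | Defs.c1 n => fst (pr m a b n)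
  | Defs.c0 n => snd (pr m a b n)
  | c0p => p
  | c0m => q
  end.

Lemma mk_heig W lam (a b p q : C) :
  (W = TypeA -> p = 0 /\ q = 0 /\ b = mu lam * a) ->
  (W = TypeD -> b = mu lam * a - (p + q) /\ a = mu lam * p /\ a = mu lam * q) ->
  checkHeig W lam (mk (mu lam) a b p q).
Proof.
  intros HA HD. split.
  - intros [n|n| |] Hc; simpl in Hc; try contradiction; destruct W; try congruence;
    simpl; destruct (HA eq_refl) as [Hp [Hq _]]; [exact Hp|exact Hq].
  - intros [n|[|n]| |]; destruct W; simpl; unfold mu; try ring;
    try (destruct (HA eq_refl) as [Hp [Hq E]]; first [rewrite E | rewrite Hp | rewrite Hq]; unfold mu; ring);
    destruct (HD eq_refl) as [E1 [E2 E3]];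
    first [rewrite E1; unfold mu; ring | rewrite E2; unfold mu; ring | rewrite E3; unfold mu; ring].
Qed.

Definition Q (m a b : C) : C := a * a - m * (a * b) + b * b.

Lemma Q_step m a b c : c = m * b - a -> Q m b c = Q m a b.
Proof. intro; subst; unfold Q; ring. Qed.

Lemma Q_const W lam xi : checkHeig W lam xi ->
  forall n, Q (mu lam) (xi (c1 n)) (xi (c0 n)) = Q (mu lam) (xi (c1 0)) (xi (c0 0)).
Proof.
  intros H n. induction n as [|n IH]; [reflexivity|]. rewrite <- IH.
  rewrite (Q_step _ (xi (c0 n))) by (apply (rec2 W lam); exact H).
  apply Q_step. apply (rec1 W lam); exact H.
Qed.

Lemma Cmod_minus (x y : C) : Cmod (x - y) <= Cmod x + Cmod y.
Proof. unfold Cminus. eapply Rle_trans; [apply Cmod_triangle|]. rewrite Cmod_opp. lra. Qed.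

Lemma Q_bound m a b : (Cmod (Q m a b) <= (1 + Cmod m) * (Cmod a ^ 2 + Cmod b ^ 2))%R.
Proof.
  unfold Q. eapply Rle_trans; [apply Cmod_triangle|].
  eapply Rle_trans; [apply Rplus_le_compat_r; apply Cmod_minus|].
  rewrite !Cmod_mult.
  pose proof (Cmod_ge_0 a). pose proof (Cmod_ge_0 b). pose proof (Cmod_ge_0 m).
  set (A := Cmod a) in *. set (B := Cmod b) in *. set (M := Cmod m) in *.
  assert (A * B <= A ^ 2 + B ^ 2)%R by nra.
  assert (M * (A * B) <= M * (A ^ 2 + B ^ 2))%R by (apply Rmult_le_compat_l; lra).
  nra.
Qed.

Lemma lim_le (K k : R) (A B : nat -> R) : ex_series A -> ex_series B ->
  (forall n, K <= k * (A n + B n))%R -> (K <= 0)%R.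
Proof.
  intros HA HB H.
  apply ex_series_lim_0 in HA. apply ex_series_lim_0 in HB.
  pose proof (is_lim_seq_plus' _ _ _ _ HA HB) as HS.
  pose proof (is_lim_seq_scal_l _ k _ HS) as HS'.
  pose proof (is_lim_seq_le _ _ _ _ H (is_lim_seq_const K) HS') as L.
  simpl in L. lra.
Qed.

Lemma Cmod_sq_0 (x : C) : (Cmod x ^ 2 <= 0)%R -> x = 0.
Proof. intro H. apply Cmod_eq_0. pose proof (Cmod_ge_0 x). nra. Qed.

Lemma sq_0 (x : C) : x * x = 0 -> x = 0.
Proof. intro H. destruct (Cmult_eq0 _ _ H); auto. Qed.

Lemma barA_zero lam xi : barHeig TypeA lam xi -> forall c, xi c = 0.
Proof.
  intros [H [L0 L1]].
  apply (zeroA lam); auto.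
  assert (EQ : Q (mu lam) (xi (c1 0)) (xi (c0 0)) = xi (c1 0) * xi (c1 0))
    by (rewrite (recA0 _ _ H); unfold Q; ring).
  assert (K : (Cmod (xi (c1 0) * xi (c1 0)) <= 0)%R).
  { apply (lim_le _ (1 + Cmod (mu lam)) _ _ L0 L1). intro n.
    rewrite <- EQ, <- (Q_const _ _ _ H n).
    eapply Rle_trans; [apply Q_bound|]. right; ring. }
  apply sq_0, Cmod_eq_0. pose proof (Cmod_ge_0 (xi (c1 0) * xi (c1 0))). lra.
Qed.

Lemma mu_neq0 lam : lam <> RtoC 2 -> mu lam <> 0.
Proof.
  intros H E. apply H. replace lam with (RtoC 2 - mu lam) by (unfold mu; ring).
  rewrite E. ring.
Qed.

Lemma cancel_l (k x y : C) : k <> 0 -> k * x = k * y -> x = y.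
Proof.
  intros Hk E. apply (lin k x y _ _ 0 0 0 0 1 0 0 Hk E); try reflexivity. ring.
Qed.

Lemma D_pq lam xi : lam <> RtoC 2 -> checkHeig TypeD lam xi -> xi c0m = xi c0p.
Proof.
  intros Hl H. apply (cancel_l (mu lam)); [now apply mu_neq0|].
  rewrite <- (recDm _ _ H), <- (recDp _ _ H). reflexivity.
Qed.

Lemma D_from_x0 lam xi : lam <> RtoC 2 -> checkHeig TypeD lam xi -> xi (c1 0) = 0 ->
  forall c, xi c = 0.
Proof.
  intros Hl H H0.
  assert (Hp : xi c0p = 0).
  { apply (cancel_l (mu lam)); [now apply mu_neq0|]. rewrite <- (recDp _ _ H), H0. ring. }
  apply (zeroD lam); auto. rewrite (D_pq _ _ Hl H). exact Hp.
Qed.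

Lemma two_neq0 : RtoC 2 <> 0.
Proof. intro H. injection H. lra. Qed.

Lemma chain_s lam xi s : lam <> RtoC 2 -> checkHeig TypeD lam xi -> mu lam = 2 * s -> s * s = 1 ->
  forall n, xi (c1 n) = xi (c1 0) /\ xi (c0 n) = s * xi (c1 0).
Proof.
  intros Hl H Ms Ss.
  pose proof (recD0 _ _ H) as E0. pose proof (recDp _ _ H) as Ep.
  rewrite (D_pq _ _ Hl H) in E0. rewrite Ms in E0, Ep.
  assert (B : xi (c0 0) = s * xi (c1 0)).
  { apply (lin 2 _ _ _ _ _ _ _ _ 2 (2 * s) (4 * xi c0p) two_neq0 E0 Ep Ss). ring. }
  intro n. induction n as [|n [IH1 IH2]]; [split; [reflexivity|exact B]|].
  assert (C1 : xi (c1 (S n)) = xi (c1 0)).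
  { rewrite (rec1 _ _ _ _ H), IH1, IH2, Ms.
    eapply (lin 1 _ _ _ _ 0 0 0 0 (2 * xi (c1 0)) 0 0 one_neq0 Ss); try reflexivity. ring. }
  split; [exact C1|]. rewrite (rec2 _ _ _ _ H), C1, IH2, Ms. ring.
Qed.

Lemma barD_s lam xi s : lam <> RtoC 2 -> barHeig TypeD lam xi -> mu lam = 2 * s -> s * s = 1 ->
  forall c, xi c = 0.
Proof.
  intros Hl [H [L0 L1]] Ms Ss.
  apply (D_from_x0 lam); auto.
  apply Cmod_sq_0. apply (lim_le _ 1 _ _ L0 L1). intro n.
  destruct (chain_s _ _ _ Hl H Ms Ss n) as [E1 _]. rewrite E1.
  pose proof (pow2_ge_0 (Cmod (xi (c0 n)))). lra.
Qed.

Lemma barD_gen lam xi : lam <> RtoC 2 -> lam <> RtoC 0 -> lam <> RtoC 4 ->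
  barHeig TypeD lam xi -> forall c, xi c = 0.
Proof.
  intros H2 H0 H4 [H [L0 L1]].
  apply (D_from_x0 lam); auto.
  assert (EQ : mu lam * mu lam * Q (mu lam) (xi (c1 0)) (xi (c0 0))
             = xi (c1 0) * xi (c1 0) * (lam * (RtoC 4 - lam))).
  { rewrite (recD0 _ _ H), (D_pq _ _ H2 H), (recDp _ _ H). unfold Q, mu. ring. }
  assert (K : (Cmod (Q (mu lam) (xi (c1 0)) (xi (c0 0))) <= 0)%R).
  { apply (lim_le _ (1 + Cmod (mu lam)) _ _ L0 L1). intro n.
    rewrite <- (Q_const _ _ _ H n).
    eapply Rle_trans; [apply Q_bound|]. right; ring. }
  assert (Q0 : Q (mu lam) (xi (c1 0)) (xi (c0 0)) = 0).
  { apply Cmod_eq_0. pose proof (Cmod_ge_0 (Q (mu lam) (xi (c1 0)) (xi (c0 0)))). lra. }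
  rewrite Q0 in EQ.
  assert (N : lam * (RtoC 4 - lam) <> 0).
  { apply Cmult_neq_0; auto. intro E. apply H4.
    replace lam with (RtoC 4 - (RtoC 4 - lam)) by ring. rewrite E; ring. }
  destruct (Cmult_eq0 (xi (c1 0) * xi (c1 0)) (lam * (RtoC 4 - lam))) as [E|E].
  - rewrite <- EQ. ring.
  - now apply sq_0.
  - contradiction.
Qed.

Lemma barD2 xi : barHeig TypeD (RtoC 2) xi -> xi c0p + xi c0m = 0.
Proof.
  intros [H [L0 L1]].
  assert (M : mu (RtoC 2) = 0) by (unfold mu; ring).
  assert (X0 : xi (c1 0) = 0) by (rewrite (recDp _ _ H), M; ring).
  assert (I : forall n, xi (c1 n) = 0 /\ Cmod (xi (c0 n)) = Cmod (xi (c0 0))).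
  { intro n. induction n as [|n [IH1 IH2]]; [split; [exact X0|reflexivity]|].
    assert (C1 : xi (c1 (S n)) = 0) by (rewrite (rec1 _ _ _ _ H), IH1, M; ring).
    split; [exact C1|]. rewrite (rec2 _ _ _ _ H), C1, M, <- IH2.
    replace (0 * 0 - xi (c0 n)) with (- xi (c0 n)) by ring. apply Cmod_opp. }
  assert (Z : xi (c0 0) = 0).
  { apply Cmod_sq_0. apply (lim_le _ 1 _ _ L0 L1). intro n.
    destruct (I n) as [_ E]. rewrite E.
    pose proof (pow2_ge_0 (Cmod (xi (c1 n)))). lra. }
  rewrite (recD0 _ _ H), X0, M in Z.
  replace (xi c0p + xi c0m) with (- (0 * 0 - (xi c0p + xi c0m))) by ring. rewrite Z. ring.
Qed.

Lemma ex0 : @ex_series R_AbsRing R_NormedModule (fun _ : nat => 0%R).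
Proof. eexists. apply (is_series_ext (fun n => scal 0%R (pow_n 0%R n))).
 intro n. unfold scal; simpl; unfold mult; simpl. ring.
 apply (is_series_scal 0%R _ (/(1-0))%R). apply is_series_geom. rewrite Rabs_R0; lra. Qed.

Lemma ex0' (f : nat -> C) : (forall n, f n = 0) -> @ex_series R_AbsRing R_NormedModule (fun n => (Cmod (f n) ^ 2)%R).
Proof.
  intro H. apply (ex_series_ext (fun _ => 0%R)); [|exact ex0].
  intro n. rewrite H, Cmod_0. simpl. ring.
Qed.

Definition w : Idx -> C := fun c => gamma c0p c - gamma c0m c.

Lemma w_heig : checkHeig TypeD (RtoC 2) w.
Proof.
  split.
  - intros [n|n| |] Hc; simpl in Hc; tauto.
  - intros [n|[|n]| |]; unfold w, gamma; simpl; ring.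
Qed.

Lemma Idot_scal W a xi c : Idot W (fun c => a * xi c) c = a * Idot W xi c.
Proof. destruct c as [n|[|n]| |]; destruct W; simpl; ring. Qed.

Lemma heig_scal W lam a xi : checkHeig W lam xi -> checkHeig W lam (fun c => a * xi c).
Proof.
  intros [H1 H2]; split.
  - intros c Hc. rewrite H1 by auto. ring.
  - intro c. rewrite Idot_scal, H2. ring.
Qed.

Lemma w_bar t : barHeig TypeD (RtoC 2) (fun c => t * w c).
Proof.
  split; [apply heig_scal, w_heig|].
  split; apply ex0'; intro n; unfold w, gamma; simpl; ring.
Qed.

Lemma bar2_char xi : barHeig TypeD (RtoC 2) xi -> forall c, xi c = xi c0p * w c.
Proof.
  intros Hb c.
  pose proof (barD2 _ Hb) as Hs.
  destruct Hb as [H _].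
  set (d := fun c => 1 * xi c + (- xi c0p) * w c).
  assert (Hd : checkHeig TypeD (RtoC 2) d) by (apply heig_lin; [exact H|exact w_heig]).
  assert (Z := zeroD _ _ Hd).
  assert (E : d c = 0).
  { apply Z; unfold d, w, gamma; simpl.
    - ring.
    - replace (1 * xi c0m + - xi c0p * (0 - 1)) with (xi c0p + xi c0m) by ring. exact Hs. }
  unfold d in E. eapply (lin 1 _ _ _ _ 0 0 0 0 1 0 0 one_neq0 E); try reflexivity. ring.
Qed.

Lemma dim0 (S : (Idx -> C) -> Prop) : (forall xi, S xi -> forall c, xi c = RtoC 0) -> dimC S 0.
Proof.
  intro H. exists (fun _ _ => RtoC 0). split; [intros; lia|]. split; [intros; lia|].
  intros xi Hx. exists (fun _ => RtoC 0). intro c. simpl. apply H; auto.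
Qed.

Lemma dim1 W lam (v : Idx -> C) c0 (t : (Idx -> C) -> C) :
  checkHeig W lam v -> v c0 = 1 ->
  (forall xi, checkHeig W lam xi -> checkHeig W lam (fun c => 1 * xi c + (- t xi) * v c) ->
     forall c, 1 * xi c + (- t xi) * v c = 0) ->
  dimC (checkHeig W lam) 1.
Proof.
  intros Hv Hc HZ. exists (fun _ => v). split; [intros; exact Hv|]. split.
  - intros a Ha i Hi. assert (i = 0)%nat by lia. subst.
    specialize (Ha c0). simpl in Ha. rewrite Hc in Ha.
    replace (a 0%nat) with (0 + a 0%nat * 1) by ring. exact Ha.
  - intros xi Hx. exists (fun _ => t xi). intro c. simpl.
    pose proof (HZ xi Hx (heig_lin _ _ _ _ _ _ Hx Hv) c) as E.
    eapply (lin 1 _ _ _ _ 0 0 0 0 1 0 0 one_neq0 E); try reflexivity. ring.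
Qed.

Close Scope C_scope.

Theorem mainTheorem9 (W : Wtype) (lam : C) :
  (~ (W = TypeD /\ lam = RtoC 2) ->
     dimC (checkHeig W lam) 1 /\ dimC (barHeig W lam) 0) /\
  (W = TypeD -> lam = RtoC 2 ->
     dimC (checkHeig W lam) 2 /\ dimC (barHeig W lam) 1 /\
     (forall xi, barHeig W lam xi <->
        exists t : C, xi = (fun c => Cmult t (Cminus (gamma c0p c) (gamma c0m c))))).
Proof.
  split.
  - intro Hn. destruct W.
    + split.
      * apply (dim1 TypeA lam (mk (mu lam) 1 (Cmult (mu lam) 1) 0 0) (c1 0) (fun xi => xi (c1 0))).
        -- apply mk_heig; [intros _; split; [reflexivity|split; reflexivity]|discriminate].
        -- reflexivity.
        -- intros xi Hx Hd. apply (zeroA lam); auto. simpl. ring.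
      * apply dim0. intros xi Hb. apply (barA_zero lam xi Hb).
    + assert (H2 : lam <> RtoC 2) by (intro E; apply Hn; auto).
      split.
      * apply (dim1 TypeD lam (mk (mu lam) (mu lam) (Cminus (Cmult (mu lam) (mu lam)) 2) 1 1) c0p
                 (fun xi => xi c0p)).
        -- apply mk_heig; [discriminate|intros _; split; [|split]; ring].
        -- reflexivity.
        -- intros xi Hx Hd. apply (zeroD lam); auto.
           ++ simpl. ring.
           ++ rewrite (D_pq _ _ H2 Hd). simpl. ring.
      * apply dim0. intros xi Hb.
        destruct (classic (lam = RtoC 0)) as [E0|E0].
        { apply (barD_s lam xi 1 H2 Hb); [subst; unfold mu; ring|ring]. }
        destruct (classic (lam = RtoC 4)) as [E4|E4].
        { apply (barD_s lam xi (-1) H2 Hb); [subst; unfold mu; ring|ring]. }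
        apply (barD_gen lam xi); auto.
  - intros HW Hl. subst W lam.
    assert (C : forall xi, barHeig TypeD (RtoC 2) xi <->
        exists t : C, xi = (fun c => Cmult t (Cminus (gamma c0p c) (gamma c0m c)))).
    { intro xi. split.
      - intro Hb. exists (xi c0p). apply functional_extensionality. intro c.
        apply (bar2_char xi Hb c).
      - intros [t Ht]. subst. apply (w_bar t). }
    split; [|split; [|exact C]].
    + set (v0 := mk (mu (RtoC 2)) 0 (-1) 1 0). set (v1 := mk (mu (RtoC 2)) 0 (-1) 0 1).
      assert (H0 : checkHeig TypeD (RtoC 2) v0)
        by (apply mk_heig; [discriminate|intros _; unfold mu; split; [|split]; ring]).
      assert (H1 : checkHeig TypeD (RtoC 2) v1)
        by (apply mk_heig; [discriminate|intros _; unfold mu; split; [|split]; ring]).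
      exists (fun i => match i with O => v0 | _ => v1 end). split; [|split].
      * intros [|i] Hi; assumption.
      * intros a Ha i Hi.
        pose proof (Ha c0p) as Ep. pose proof (Ha c0m) as Em. simpl in Ep, Em.
        destruct i as [|[|i]]; [| |lia].
        -- replace (a 0%nat) with (Cplus (Cplus 0 (Cmult (a 0%nat) 1)) (Cmult (a 1%nat) 0)) by ring. exact Ep.
        -- replace (a 1%nat) with (Cplus (Cplus 0 (Cmult (a 0%nat) 0)) (Cmult (a 1%nat) 1)) by ring. exact Em.
      * intros xi Hx. exists (fun i => match i with O => xi c0p | _ => xi c0m end). intro c.
        assert (Hd1 := heig_lin _ _ 1 (- xi c0p)%C _ _ Hx H0).
        assert (Hd := heig_lin _ _ 1 (- xi c0m)%C _ _ Hd1 H1). simpl in Hd.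
        set (d := fun c => (1 * (1 * xi c + - xi c0p * v0 c) + - xi c0m * v1 c)%C) in Hd.
        assert (E : d c = 0) by (apply (zeroD _ _ Hd); unfold d; simpl; ring).
        unfold d in E. simpl.
        eapply (lin 1 _ _ _ _ 0 0 0 0 1 0 0 one_neq0 E); try reflexivity. ring.
    + exists (fun _ => w). split; [|split].
      * intros i _. rewrite <- (Cmult_1_l (w _)) || idtac.
        replace w with (fun c => Cmult 1 (w c)) by (apply functional_extensionality; intro; ring).
        apply w_bar.
      * intros a Ha i Hi. assert (i = 0)%nat by lia. subst.
        specialize (Ha c0p). simpl in Ha. unfold w, gamma in Ha; simpl in Ha.
        replace (a 0%nat) with (Cplus 0 (Cmult (a 0%nat) (Cminus 1 0))) by ring. exact Ha.
      * intros xi Hb. exists (fun _ => xi c0p). intro c. simpl.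
        rewrite (bar2_char xi Hb c). ring.
Qed.
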